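(* Let $C=(C_n,d_n)_{n\in\mathbb{Z}}$ be a free chain complex of $\mathbb{Z}$-modules with distinguished $\mathbb{Z}$-bases $\beta_n\subset C_n$, equipped with a finite filtration $0=C^0\subseteq C^1\subseteq\cdots\subseteq C^m=C$ by sub-chain complexes, each $C^i_n$ being the submodule spanned by $\beta_n\cap C^i_n$. Let $V=\{(\sigma_i;\tau_i)\}_{i\in I}$ be an admissible discrete vector field on $C$ such that for every $i\in I$ the cells $\sigma_i$ and $\tau_i$ have the same filtration index. Then the canonical vector-field reduction $\rho=(f,g,h):(C_n,d_n)\Rightarrow(C^c_n,d'_n)$ is compatible with the filtration: the differential $d'$ preserves the filtration $C^{c,i}_n=\mathbb{Z}[\beta^c_n\cap C^i_n]$ of the critical complex (so $C^c$ is a filtered chain complex), $f$ and $g$ are filtered chain complex morphisms ($f(C^i_n)\subseteq C^{c,i}_n$, $g(C^{c,i}_n)\subseteq C^i_n$), and $h(C^i_n)\subseteq C^i_{n+1}$ for all $n,i$, i.e. the homotopy $h$ has order $\leq 0$.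
   Context: A reduction $\rho=(f,g,h):D\Rightarrow C'$ between chain complexes consists of chain morphisms $f:D\to C'$, $g:C'\to D$ and a degree $+1$ homomorphism $h:D\to D$ with $fg=\mathrm{id}$, $gf+dh+hd=\mathrm{id}_D$, $fh=0$, $hg=0$, $hh=0$. A generator $\sigma\in\beta_n$ has filtration index $i$ if $\sigma\in C^i_n$ and $\sigma\notin C^{i-1}_n$. A discrete vector field (DVF) on $C$ is a set $V=\{(\sigma_i;\tau_i)\}_{i\in I}$ with $\sigma_i\in\beta_n$, $\tau_i\in\beta_{n+1}$ for some $n$ (depending on $i$), the coefficient of $\sigma_i$ in $d\tau_i$ equal to $\pm1$, and each basis element appearing at most once in $V$. Cells not appearing in $V$ are critical. A $V$-path of degree $n$ and length $m$ is a sequence $\{(\sigma_{i_k};\tau_{i_k})\}_{0\le k<m}$ of elements of $V$ with each $\tau_{i_k}$ an $n$-cell and, for $0<k<m$, $\sigma_{i_k}$ a face (nonzero coefficient in $d\tau_{i_{k-1}}$) of $\tau_{i_{k-1}}$ different from $\sigma_{i_{k-1}}$; it starts from $\sigma_{i_0}$. $V$ is admissible if for each $n$ there is a function $\lambda_n:\beta_n\to\mathbb{N}$ such that every $V$-path starting from $\sigma\in\beta_n$ has length at most $\lambda_n(\sigma)$. Canonical reduction: $V$ splits each $\beta_n=\beta^t_n\sqcup\beta^s_n\sqcup\beta^c_n$ into target cells (the $\tau_i$), source cells (the $\sigma_i$) and critical cells, hence $C_n=C^t_n\oplus C^s_n\oplus C^c_n$, and $d_n$ is written as a $3\times3$ block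 matrix $(d_{n,a,b})$ with respect to these decompositions (index $1=t$, $2=s$, $3=c$). For admissible $V$, $d_{n,2,1}:C^t_n\to C^s_{n-1}$ is an isomorphism. Then $C^c_n=\mathbb{Z}[\beta^c_n]$ and $d'_n=d_{n,3,3}-d_{n,3,1}d_{n,2,1}^{-1}d_{n,2,3}$, $f_n=[\,0\;\; -d_{n,3,1}d_{n,2,1}^{-1}\;\;1\,]$, $g_n=[\,-d_{n,2,1}^{-1}d_{n,2,3};\;0;\;1\,]^T$ (column), and $h_n$ is the block matrix whose only nonzero block is $d_{n,2,1}^{-1}$ in position $(1,2)$, i.e. $h$ sends $C^s_{n}$ to $C^t_{n+1}$ via $d_{n+1,2,1}^{-1}$ and is zero on $C^t_n\oplus C^c_n$. This $\rho$ is a reduction. *)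

(* Defs.v *)
From HB Require Import structures.
From mathcomp Require Import all_boot all_order all_algebra.
From mathcomp Require Import freeg.
From Stdlib Require Import ClassicalEpsilon.
Set Implicit Arguments. Unset Strict Implicit. Unset Printing Implicit Defensive.
Import Order.TTheory GRing.Theory Num.Theory.
Local Open Scope ring_scope.

(* Encoding: the graded free module  (+)_n C_n  with C_n = Z[beta_n] is
   {freeg Cell / int}, where Cell is the disjoint union of all the bases
   beta_n and  cdeg : Cell -> int  gives the degree of a basis element.
   A chain c lies in C_n iff it is supported on cells of degree n. *)
Notation chain Cell := {freeg Cell / int}.

Definition decP (P : Prop) : bool :=
  if excluded_middle_informative P then true else false.

Definition supp_in (Cell : choiceType) (P : Cell -> bool) (c : chain Cell) :=
  forall x, coeff x c != 0 -> P x.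

Definition bdry (Cell : choiceType) (bd : Cell -> chain Cell) (c : chain Cell)
  : chain Cell := fglift bd c.

Definition proj (Cell : choiceType) (P : Cell -> bool) (c : chain Cell)
  : chain Cell := fglift (fun x => if P x then << x >> else 0) c.

Definition is_DVF (Cell : choiceType) (cdeg : Cell -> int)
    (bd : Cell -> chain Cell) (V : Cell -> Cell -> bool) : Prop :=
  (forall s t, V s t -> cdeg t = cdeg s + 1 /\
                        (coeff s (bd t) = 1 \/ coeff s (bd t) = -1)) /\
  (* each basis element appears at most once in V *)
  (forall s t s' t', V s t -> V s' t' ->
     (s = s' \/ s = t' \/ t = s' \/ t = t') -> s = s' /\ t = t').

Definition Vpath (Cell : choiceType) (cdeg : Cell -> int)
    (bd : Cell -> chain Cell) (V : Cell -> Cell -> bool) (n : int)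
    (p : seq (Cell * Cell)) : bool :=
  all (fun q => V q.1 q.2 && (cdeg q.2 == n)) p &&
  sorted (fun q q' : Cell * Cell =>
            (coeff q'.1 (bd q.2) != 0) && (q'.1 != q.1)) p.

Definition starts_from (Cell : choiceType) (p : seq (Cell * Cell)) (s : Cell) :=
  if p is q :: _ then q.1 == s else false.

Definition admissible (Cell : choiceType) (cdeg : Cell -> int)
    (bd : Cell -> chain Cell) (V : Cell -> Cell -> bool) : Prop :=
  exists lam : int -> Cell -> nat,
    forall (n : int) (s : Cell), cdeg s = n ->
    forall (k : int) (p : seq (Cell * Cell)),
      Vpath cdeg bd V k p -> starts_from p s -> (size p <= lam n s)%N.

Definition is_src (Cell : choiceType) (V : Cell -> Cell -> bool) (x : Cell) :=
  decP (exists t, V x t).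
Definition is_tgt (Cell : choiceType) (V : Cell -> Cell -> bool) (x : Cell) :=
  decP (exists s, V s x).
Definition is_crit (Cell : choiceType) (V : Cell -> Cell -> bool) (x : Cell) :=
  ~~ is_src V x && ~~ is_tgt V x.

Definition d21 (Cell : choiceType) (bd : Cell -> chain Cell)
    (V : Cell -> Cell -> bool) (c : chain Cell) : chain Cell :=
  proj (is_src V) (bdry bd (proj (is_tgt V) c)).

(* the inverse of the isomorphism d_{2,1} : C^t -> C^s
   (a two-sided inverse between C^s and C^t, chosen classically; it is
   unique on C^s when it exists, which is the case for admissible V) *)
Definition is_d21_inverse (Cell : choiceType) (bd : Cell -> chain Cell)
    (V : Cell -> Cell -> bool) (k : chain Cell -> chain Cell) : Prop :=
  (forall c, supp_in (is_src V) c ->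
      supp_in (is_tgt V) (k c) /\ d21 bd V (k c) = c) /\
  (forall c, supp_in (is_tgt V) c -> k (d21 bd V c) = c).

Definition d21inv (Cell : choiceType) (bd : Cell -> chain Cell)
    (V : Cell -> Cell -> bool) : chain Cell -> chain Cell :=
  epsilon (inhabits (fun _ => 0)) (is_d21_inverse bd V).

(* C^c_n = Z[beta^c_n] is viewed as the submodule of C_n spanned by the
   critical cells (the summand C^c_n of C_n = C^t_n + C^s_n + C^c_n). *)

Definition red_h (Cell : choiceType) (bd : Cell -> chain Cell)
    (V : Cell -> Cell -> bool) (c : chain Cell) : chain Cell :=
  d21inv bd V (proj (is_src V) c).

(* f = [ 0  -d_{3,1} d_{2,1}^{-1}  1 ] *)
Definition red_f (Cell : choiceType) (bd : Cell -> chain Cell)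
    (V : Cell -> Cell -> bool) (c : chain Cell) : chain Cell :=
  proj (is_crit V) c
  - proj (is_crit V) (bdry bd (d21inv bd V (proj (is_src V) c))).

(* g = [ -d_{2,1}^{-1} d_{2,3} ; 0 ; 1 ]  (applied to critical chains) *)
Definition red_g (Cell : choiceType) (bd : Cell -> chain Cell)
    (V : Cell -> Cell -> bool) (c : chain Cell) : chain Cell :=
  c - d21inv bd V (proj (is_src V) (bdry bd c)).

Definition red_d (Cell : choiceType) (bd : Cell -> chain Cell)
    (V : Cell -> Cell -> bool) (c : chain Cell) : chain Cell :=
  proj (is_crit V) (bdry bd c)
  - proj (is_crit V)
      (bdry bd (d21inv bd V (proj (is_src V) (bdry bd c)))).

(* F i x  <->  the basis element x lies in C^i (i.e. x in beta cap C^i) *)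
Definition filt_index (Cell : choiceType) (F : nat -> Cell -> bool)
    (i : nat) (x : Cell) : bool :=
  (0 < i)%N && F i x && ~~ F i.-1 x.

Definition in_Cin (Cell : choiceType) (cdeg : Cell -> int)
    (F : nat -> Cell -> bool) (i : nat) (n : int) (c : chain Cell) : Prop :=
  supp_in (fun x => F i x && (cdeg x == n)) c.

Definition in_Ccin (Cell : choiceType) (cdeg : Cell -> int)
    (V : Cell -> Cell -> bool) (F : nat -> Cell -> bool) (i : nat) (n : int)
    (c : chain Cell) : Prop :=
  supp_in (fun x => [&& is_crit V x, F i x & cdeg x == n]) c.

(* Main.v *)
Require Import Defs.
From HB Require Import structures.
From mathcomp Require Import all_boot all_order all_algebra.
From mathcomp Require Import freeg.
From Stdlib Require Import ClassicalEpsilon.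
Set Implicit Arguments. Unset Strict Implicit. Unset Printing Implicit Defensive.
Import Order.TTheory GRing.Theory Num.Theory.
Local Open Scope ring_scope.

Section Gen.
Variable Cell : choiceType.
Local Notation ch := {freeg Cell / int}.

HB.instance Definition _ (M : lmodType int) (f : Cell -> M) :=
  GRing.isAdditive.Build ch M (fglift f) (lift_is_additive f).

Lemma fgliftE (M : lmodType int) (f : Cell -> M) (D : ch) :
  fglift f D = \sum_(z <- dom D) coeff z D *: f z.
Proof.
rewrite -{1}(freeg_sumE D) raddf_sum; apply: eq_bigr => z _; exact: liftU.
Qed.

Lemma fgliftB (M : lmodType int) (f : Cell -> M) (a b : ch) :
  fglift f (a - b) = fglift f a - fglift f b.
Proof. exact: (lift_is_additive f). Qed.

Lemma fgliftD (M : lmodType int) (f : Cell -> M) (a b : ch) :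
  fglift f (a + b) = fglift f a + fglift f b.
Proof.
have := fgliftB f a (- b); rewrite opprK => ->.
have -> : fglift f (- b) = fglift f 0 - fglift f b by rewrite -fgliftB sub0r.
have -> : fglift f 0 = 0 by rewrite fgliftE dom0 big_nil.
by rewrite sub0r opprK.
Qed.

Lemma fglift_eq (M : lmodType int) (f g : Cell -> M) (D : ch) :
  (forall z, coeff z D != 0 -> f z = g z) -> fglift f D = fglift g D.
Proof.
move=> H; rewrite !fgliftE big_seq [RHS]big_seq; apply: eq_bigr => z.
by rewrite mem_dom => /H ->.
Qed.

Lemma scaleU (c : int) (z : Cell) : c *: (<< z >> : ch) = << c *g z >>.
Proof. by apply/eqP/freeg_eqP => x; rewrite coeffZ !coeffU mul1r. Qed.

Lemma fglift_id (D : ch) : fglift (fun x => << x >>) D = D.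
Proof.
rewrite fgliftE; rewrite -[RHS]freeg_sumE; apply: eq_bigr => z _; exact: scaleU.
Qed.

Lemma fgliftU (M : lmodType int) (f : Cell -> M) z : fglift f << z >> = f z.
Proof. by rewrite liftU scale1r. Qed.

Lemma fgliftZ (f : Cell -> ch) (c : int) (X : ch) :
  fglift f (c *: X) = c *: fglift f X.
Proof.
by rewrite -[c in LHS]intz -[c in RHS]intz !scaler_int raddfMz.
Qed.

Lemma fglift_comp (f g : Cell -> ch) (D : ch) :
  fglift g (fglift f D) = fglift (fun x => fglift g (f x)) D.
Proof.
rewrite [fglift f D]fgliftE raddf_sum [RHS]fgliftE; apply: eq_bigr => z _ /=.
exact: fgliftZ.
Qed.

Lemma supp0 P : supp_in P (0 : ch).
Proof. by move=> x; rewrite coeff0 eqxx. Qed.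

Lemma suppD P (a b : ch) : supp_in P a -> supp_in P b -> supp_in P (a + b).
Proof.
move=> Ha Hb x; rewrite coeffD; case: (boolP (coeff x a == 0)) => [/eqP ->|/Ha //].
by rewrite add0r => /Hb.
Qed.

Lemma suppN P (a : ch) : supp_in P a -> supp_in P (- a).
Proof. by move=> Ha x; rewrite coeffN oppr_eq0 => /Ha. Qed.

Lemma suppB P (a b : ch) : supp_in P a -> supp_in P b -> supp_in P (a - b).
Proof. by move=> Ha Hb; apply: suppD => //; apply: suppN. Qed.

Lemma suppZ P c (a : ch) : supp_in P a -> supp_in P (c *: a).
Proof. by move=> Ha x; rewrite coeffZ mulf_eq0 negb_or => /andP [_ /Ha]. Qed.

Lemma suppU (P : pred Cell) z : P z -> supp_in P (<< z >> : ch).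
Proof. by move=> Pz x; rewrite coeffU mul1r pnatr_eq0 eqb0 negbK => /eqP <-. Qed.

Lemma supp_sum P (r : seq Cell) (F : Cell -> ch) :
  (forall z, z \in r -> supp_in P (F z)) -> supp_in P (\sum_(z <- r) F z).
Proof.
elim: r => [|a r IH] H; first by rewrite big_nil; apply: supp0.
rewrite big_cons; apply: suppD; first by apply: H; rewrite inE eqxx.
by apply: IH => z zr; apply: H; rewrite inE zr orbT.
Qed.

Lemma supp_fglift P (f : Cell -> ch) (D : ch) :
  (forall z, coeff z D != 0 -> supp_in P (f z)) -> supp_in P (fglift f D).
Proof.
move=> H; rewrite fgliftE; apply: supp_sum => z; rewrite mem_dom => /H.
exact: suppZ.
Qed.

Lemma supp_and (P Q : pred Cell) (a : ch) :
  supp_in (fun x => P x && Q x) a <-> supp_in P a /\ supp_in Q a.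
Proof.
split; first by move=> H; split=> x /H /andP [].
by case=> H1 H2 x nz; rewrite (H1 _ nz) (H2 _ nz).
Qed.

Lemma supp_weak (P Q : pred Cell) (a : ch) :
  (forall x, P x -> Q x) -> supp_in P a -> supp_in Q a.
Proof. by move=> PQ H x /H /PQ. Qed.

Lemma supp_proj P Q (c : ch) : supp_in Q c -> supp_in (fun x => P x && Q x) (proj P c).
Proof.
move=> H; apply: supp_fglift => z nz; case Pz: (P z); last exact: supp0.
by apply: suppU; rewrite Pz (H _ nz).
Qed.

Lemma proj_id P (c : ch) : supp_in P c -> proj P c = c.
Proof.
move=> H; rewrite /proj -[RHS]fglift_id; apply: fglift_eq => z /H ->; done.
Qed.

Lemma coeff_proj P (c : ch) x : coeff x (proj P c) = if P x then coeff x c else 0.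
Proof.
rewrite /proj fgliftE raddf_sum /=.
transitivity (\sum_(z <- dom c | z == x) (if P x then coeff x c else 0)).
  rewrite [RHS]big_mkcond /=; apply: eq_bigr => z _; rewrite coeffZ.
  case: eqP => [->|nzx]; first by case: (P x); rewrite ?coeffU ?eqxx ?coeff0 ?mulr0 ?mulr1.
  by case: (P z); rewrite ?coeffU ?coeff0 ?mulr0 //; case: eqP => // ?; rewrite mulr0.
rewrite big_const_seq (count_uniq_mem x (uniq_dom c)).
case: (boolP (x \in dom c)) => xn /=; first by rewrite addr0.
by rewrite coeff_outdom ?xn // if_same.
Qed.
End Gen.

Lemma decPP (P : Prop) : reflect P (Defs.decP P).
Proof. by rewrite /Defs.decP; case: excluded_middle_informative => h; constructor. Qed.

Section Main.
Variable Cell : choiceType.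
Local Notation ch := {freeg Cell / int}.
Variable cdeg : Cell -> int.
Variable bd : Cell -> ch.
Hypothesis Hbd_deg : forall x y, coeff y (bd x) != 0 -> cdeg y = cdeg x - 1.
Variable V : Cell -> Cell -> bool.
Hypothesis HV : is_DVF cdeg bd V.
Variable lam : int -> Cell -> nat.
Hypothesis Hlam : forall (n : int) (s : Cell), cdeg s = n ->
    forall (k : int) (p : seq (Cell * Cell)),
      Vpath cdeg bd V k p -> starts_from p s -> (size p <= lam n s)%N.

Local Notation src := (is_src V).
Local Notation tgt := (is_tgt V).

Lemma srcP s : reflect (exists t, V s t) (src s).
Proof. exact: decPP. Qed.
Lemma tgtP t : reflect (exists s, V s t) (tgt t).
Proof. exact: decPP. Qed.

Definition pt (s : Cell) : Cell :=
  match excluded_middle_informative (exists t, V s t) with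
  | left h => xchoose h | right _ => s end.

Lemma pt_spec s : src s -> V s (pt s).
Proof.
move/srcP; rewrite /pt; case: excluded_middle_informative => // h _.
exact: xchooseP.
Qed.

Definition eps s := coeff s (bd (pt s)).

Lemma eps2 s : src s -> eps s * eps s = 1.
Proof.
move=> ss; rewrite /eps; case: (proj1 HV _ _ (pt_spec ss)) => _ [->|->].
  by rewrite mulr1.
by rewrite mulrNN mulr1.
Qed.

Lemma pt_deg s : src s -> cdeg (pt s) = cdeg s + 1.
Proof. by move/pt_spec/(proj1 HV) => []. Qed.

Lemma pt_tgt s : src s -> tgt (pt s).
Proof. by move/pt_spec => h; apply/tgtP; exists s. Qed.

Definition Rs s : ch := proj src (bd (pt s)) - eps s *: << s >>.

Lemma Rs_supp s s' : src s -> coeff s' (Rs s) != 0 ->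
  [/\ s' != s, src s' & coeff s' (bd (pt s)) != 0].
Proof.
move=> ss; rewrite /Rs coeffB coeffZ coeffU coeff_proj mul1r.
case: (eqVneq s s') => [<-|ne]; first by rewrite ss mulr1 /eps subrr eqxx.
rewrite mulr0 subr0; case: ifP => [s's|]; last by rewrite eqxx.
by move=> nz; split=> //; rewrite eq_sym.
Qed.

Lemma d21U t : tgt t -> d21 bd V << t >> = proj src (bd t).
Proof.
by move=> tt; rewrite /d21 (proj_id (suppU tt)) /bdry fgliftU.
Qed.

Lemma d21_pt s : src s -> d21 bd V << pt s >> = Rs s + eps s *: << s >>.
Proof. by move=> ss; rewrite d21U ?pt_tgt // /Rs subrK. Qed.

Fixpoint Lf (k : nat) (s : Cell) : ch :=
  match k with
  | 0%N => 0
  | k'.+1 => eps s *: (<< pt s >> - fglift (Lf k') (Rs s))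
  end.

Definition Pm s (j : nat) : bool :=
  Defs.decP (j = 0%N \/ exists k p, Vpath cdeg bd V k p /\ starts_from p s /\ size p = j).

Lemma exPm s : exists j, Pm s j.
Proof. by exists 0%N; apply/decPP; left. Qed.

Lemma ubPm s : forall j, Pm s j -> (j <= lam (cdeg s) s)%N.
Proof.
move=> j /decPP [->//|[k [p [vp [sp <-]]]]]; exact: (Hlam erefl vp sp).
Qed.

Definition mu s := ex_maxn (exPm s) (@ubPm s).

Lemma mu_lt s s' : src s -> coeff s' (Rs s) != 0 -> (mu s' < mu s)%N.
Proof.
move=> ss /(Rs_supp ss) [ne ss' face].
have Vs := pt_spec ss.
have key : forall p, Vpath cdeg bd V (cdeg (pt s)) p -> starts_from p s' ->
    (size p < mu s)%N.
  move=> p vp sp; rewrite /mu; case: ex_maxnP => i _ imax.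
  apply: imax; apply/decPP; right; exists (cdeg (pt s)), ((s, pt s) :: p).
  split; last by split => //=; rewrite eqxx.
  move: vp sp; rewrite /Vpath /=.
  case: p => [|[a b] p] //= H1 H2.
  case/andP: H1 => H1 srt; case/andP: H1 => H1 al; case/andP: H1 => Vab db.
  move/eqP: H2 => ea.
  subst a; rewrite Vs eqxx /= Vab db al /= srt face ne.
  done.
rewrite /mu; case: ex_maxnP => i /decPP [->|[k [p [vp [sp <-]]]]] _.
  apply: ltnW; apply: (key [:: (s', pt s')]); last by rewrite /= eqxx.
  rewrite /Vpath /= pt_spec //= !andbT; apply/eqP.
  by rewrite pt_deg // (Hbd_deg face) subrK.
have ek : k = cdeg (pt s).
  move: vp sp; rewrite /Vpath; case: p => [|[a b] p] //= H1 /eqP ea; subst a.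
  case/andP: H1 => H1 _; case/andP: H1 => H1 _; case/andP: H1 => Vab /eqP <-.
  have [-> _] := proj1 HV _ _ Vab.
  by rewrite (Hbd_deg face) subrK.
by apply: key => //; rewrite -ek.
Qed.


Lemma Lf_stab k s : src s -> (mu s < k)%N -> Lf k.+1 s = Lf k s.
Proof.
elim: k s => [//|k IH] s ss lt.
rewrite [Lf k.+2 s]/= [Lf k.+1 s]/=; congr (_ *: (_ - _)).
apply: fglift_eq => z nz; have [_ zs _] := Rs_supp ss nz.
by apply: IH zs _; apply: leq_trans (mu_lt ss nz) lt.
Qed.

Lemma Lf_L k s : src s -> (mu s < k)%N -> Lf k s = Lf (mu s).+1 s.
Proof.
move=> ss; elim: k => [//|k IH] lt.
case: (ltnP (mu s) k) => h; first by rewrite Lf_stab // IH.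
have e : mu s = k by apply/eqP; rewrite eqn_leq h -ltnS lt.
by rewrite e.
Qed.

Definition L s := Lf (mu s).+1 s.

Lemma d21B (a b : ch) : d21 bd V (a - b) = d21 bd V a - d21 bd V b.
Proof. by rewrite /d21 /proj /bdry !fgliftB. Qed.

Lemma d21Z (c : int) (a : ch) : d21 bd V (c *: a) = c *: d21 bd V a.
Proof. by rewrite /d21 /proj /bdry !fgliftZ. Qed.

Lemma d21_fglift (f : Cell -> ch) (D : ch) : d21 bd V (fglift f D) = fglift (fun x => d21 bd V (f x)) D.
Proof.
rewrite /d21 /proj /bdry (fglift_comp f) [fglift bd _]fglift_comp.
by rewrite fglift_comp.
Qed.

Lemma d21_Lf k s : src s -> (mu s < k)%N -> d21 bd V (Lf k s) = << s >>.
Proof.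
elim: k s => [//|k IH] s ss lt /=.
rewrite d21Z d21B d21_pt // d21_fglift.
rewrite (@fglift_eq _ _ _ (fun x => << x >>)) ?fglift_id; last first.
  move=> z nz; have [_ zs _] := Rs_supp ss nz.
  by apply: IH zs _; apply: leq_trans (mu_lt ss nz) lt.
by rewrite [Rs s + _]addrC addrK scalerA eps2 // scale1r.
Qed.

Lemma d21_L s : src s -> d21 bd V (L s) = << s >>.
Proof. by move=> ss; apply: d21_Lf. Qed.

Lemma Lf_tgt k s : src s -> supp_in tgt (Lf k s).
Proof.
elim: k s => [|k IH] s ss /=; first exact: supp0.
apply: suppZ; apply: suppB; first by apply: suppU; apply: pt_tgt.
apply: supp_fglift => z nz; have [_ zs _] := Rs_supp ss nz; exact: IH.
Qed.

Lemma L_d21 t : tgt t -> fglift L (d21 bd V << t >>) = << t >>.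
Proof.
case/tgtP => s Vst; have ss : src s by apply/srcP; exists t.
have [_ ->] := proj2 HV _ _ _ _ Vst (pt_spec ss) (or_introl erefl).
rewrite d21_pt // fgliftD fgliftZ fgliftU.
have -> : L s = eps s *: (<< pt s >> - fglift (Lf (mu s)) (Rs s)) by [].
rewrite scalerA eps2 // scale1r.
rewrite (@fglift_eq _ _ _ (Lf (mu s)) (Rs s)); first by rewrite addrC subrK.
move=> z nz; have [_ zs _] := Rs_supp ss nz.
by rewrite /L -(@Lf_L (mu s)) // mu_lt.
Qed.

Lemma L0_inv : is_d21_inverse bd V (fglift L).
Proof.
split.
  move=> c cs; split.
    by apply: supp_fglift => z nz; apply: Lf_tgt; apply: cs.
  rewrite d21_fglift -[RHS]fglift_id; apply: fglift_eq => z nz.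
  by apply: d21_L; apply: cs.
move=> c ct; rewrite -{1}(fglift_id c) d21_fglift fglift_comp -[RHS]fglift_id.
by apply: fglift_eq => z nz; apply: L_d21; apply: ct.
Qed.

Lemma d21inv_eq c : supp_in src c -> d21inv bd V c = fglift L c.
Proof.
have H : is_d21_inverse bd V (d21inv bd V).
  exact: (epsilon_spec (inhabits (fun _ : ch => (0 : ch))) (is_d21_inverse bd V)
             (ex_intro _ _ L0_inv)).
move=> cs; have [_ H2] := H; have [H1 _] := L0_inv.
have [tg dd] := H1 c cs.
by rewrite -{1}dd H2.
Qed.

Lemma proj_supp P (c : ch) : supp_in P (proj P c).
Proof.
apply: supp_fglift => z _; case: ifP => Pz; [exact: suppU | exact: supp0].
Qed.

Section Filt.
Variable m : nat.
Variable F : nat -> Cell -> bool.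
Hypothesis HFmono : forall (i : nat) x, (i < m)%N -> F i x -> F i.+1 x.
Hypothesis HFsub : forall (i : nat) (c : ch),
      (i <= m)%N -> supp_in (F i) c -> supp_in (F i) (bdry bd c).
Hypothesis HVfilt : forall s t, V s t ->
      exists i : nat, (i <= m)%N /\ filt_index F i s /\ filt_index F i t.

Lemma Fmono_le i j x : (i <= j)%N -> (j <= m)%N -> F i x -> F j x.
Proof.
elim: j => [|j IH]; first by rewrite leqn0 => /eqP ->.
rewrite leq_eqVlt => /orP [/eqP -> //| ltij] jm Fi.
by apply: HFmono => //; apply: IH => //; apply: ltnW.
Qed.

Lemma F_pt i s : src s -> (i <= m)%N -> F i s -> F i (pt s).
Proof.
move=> ss im Fis.
have [j [jm [fs ft]]] := HVfilt (pt_spec ss).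
move: fs ft; rewrite /filt_index => /andP [/andP [j0 Fjs] nFs] /andP [/andP [_ Fjt] _].
case: (leqP j i) => ji; first exact: Fmono_le Fjt.
have : F j.-1 s.
  apply: (@Fmono_le i) => //; first by rewrite -ltnS prednK.
  exact: leq_trans (leq_pred j) jm.
by rewrite (negbTE nFs).
Qed.

Lemma F_face i t y : (i <= m)%N -> F i t -> coeff y (bd t) != 0 -> F i y.
Proof.
move=> im Ft; have := HFsub im (suppU Ft); rewrite /bdry fgliftU; apply.
Qed.

Lemma bdry_supp i n (c : ch) : (i <= m)%N ->
  supp_in (fun x => F i x && (cdeg x == n)) c ->
  supp_in (fun x => F i x && (cdeg x == n - 1)) (bdry bd c).
Proof.
move=> im /supp_and [h1 h2]; apply/supp_and; split; first exact: HFsub.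
apply: supp_fglift => z nz y /Hbd_deg ->.
by rewrite (eqP (h2 _ nz)).
Qed.

Lemma Lf_filt k i s : (i <= m)%N -> src s -> F i s ->
  supp_in (fun x => F i x && (cdeg x == cdeg s + 1)) (Lf k s).
Proof.
move=> im; elim: k s => [|k IH] s ss Fs /=; first exact: supp0.
apply: suppZ; apply: suppB.
  by apply: suppU; rewrite F_pt // pt_deg // eqxx.
apply: supp_fglift => z nz; have [_ zs face] := Rs_supp ss nz.
have Fz : F i z := F_face im (F_pt ss im Fs) face.
have dz : cdeg z = cdeg s by rewrite (Hbd_deg face) pt_deg // addrK.
by rewrite -dz; apply: IH.
Qed.

Lemma L0_filt i n (c : ch) : (i <= m)%N ->
  supp_in (fun x => F i x && (cdeg x == n)) c ->
  supp_in (fun x => F i x && (cdeg x == n + 1)) (d21inv bd V (proj src c)).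
Proof.
move=> im hc; rewrite d21inv_eq; last exact: proj_supp.
apply: supp_fglift => z; rewrite coeff_proj; case: ifP => [zs nz|]; last by rewrite eqxx.
have /andP [Fz /eqP dz] := hc z nz.
by rewrite -dz; apply: Lf_filt.
Qed.

End Filt.
End Main.

Set Implicit Arguments.
Unset Implicit Arguments.
Theorem theorem3
  (Cell : choiceType) (cdeg : Cell -> int) (bd : Cell -> {freeg Cell / int})
  (Hbd_deg : forall x y, coeff y (bd x) != 0 -> cdeg y = cdeg x - 1)
  (Hdd : forall x, bdry bd (bd x) = 0)
  (m : nat) (F : nat -> Cell -> bool)
  (HF0 : forall x, ~~ F 0%N x)
  (HFm : forall x, F m x)
  (HFmono : forall (i : nat) x, (i < m)%N -> F i x -> F i.+1 x)
  (HFsub : forall (i : nat) (c : {freeg Cell / int}),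
      (i <= m)%N -> supp_in (F i) c -> supp_in (F i) (bdry bd c))
  (V : Cell -> Cell -> bool)
  (HV : is_DVF cdeg bd V)
  (HVadm : admissible cdeg bd V)
  (HVfilt : forall s t, V s t ->
      exists i : nat, (i <= m)%N /\ filt_index F i s /\ filt_index F i t) :
  forall (i : nat) (n : int), (i <= m)%N ->
    (forall c, in_Ccin cdeg V F i (n + 1) c ->
               in_Ccin cdeg V F i n (red_d bd V c)) /\
    (forall c, in_Cin cdeg F i n c -> in_Ccin cdeg V F i n (red_f bd V c)) /\
    (forall c, in_Ccin cdeg V F i n c -> in_Cin cdeg F i n (red_g bd V c)) /\
    (forall c, in_Cin cdeg F i n c -> in_Cin cdeg F i (n + 1) (red_h bd V c)).
Proof.
have [lam Hlam] := HVadm.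
move=> i n im.
have L0f := L0_filt Hbd_deg HV Hlam HFmono HFsub HVfilt im.
have bds := bdry_supp Hbd_deg HFsub im.
have wk : forall n (c : {freeg Cell / int}), in_Ccin cdeg V F i n c ->
    supp_in (fun x => F i x && (cdeg x == n)) c.
  by move=> k c; apply: supp_weak => x /andP [].
split; [|split; [|split]].
- move=> c hc; rewrite /in_Ccin /red_d.
  have h1 := bds _ _ (wk _ _ hc); rewrite addrK in h1.
  have h2 := bds _ _ (L0f _ _ h1); rewrite addrK in h2.
  by apply: suppB; apply: supp_proj.
- move=> c hc; rewrite /in_Ccin /red_f.
  have h2 := bds _ _ (L0f _ _ hc); rewrite addrK in h2.
  by apply: suppB; apply: supp_proj.
- move=> c hc; rewrite /in_Cin /red_g.
  have h1 := bds _ _ (wk _ _ hc).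
  have h2 := L0f _ _ h1; rewrite subrK in h2.
  by apply: suppB => //; apply: wk.
- by move=> c hc; rewrite /in_Cin /red_h; apply: L0f.
Qed.
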